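(* Let $q$ be a prime number and $\mathbb{A}=\mathbb{Q}\cap[-1,0[$. Then $\mathbb{A}\text{-}\mathcal{KS}(q^{2})=\emptyset$.
   Context: Every nonzero rational $\alpha$ is written $\alpha=\alpha_1/\alpha_2$ with $\alpha_1\in\mathbb{Z}$, $\alpha_2$ a positive integer and $\gcd(\alpha_1,\alpha_2)=1$. For an integer $N\ge 2$ and a nonzero rational $\alpha=\alpha_1/\alpha_2$, $N$ is called an $\alpha$-Korselt number if $N\neq\alpha$ and $\alpha_2p-\alpha_1$ divides $\alpha_2N-\alpha_1$ (in $\mathbb{Z}$) for every prime divisor $p$ of $N$. For a subset $\mathbb{A}\subseteq\mathbb{Q}$, $\mathbb{A}\text{-}\mathcal{KS}(N)$ denotes the set of all $\beta\in\mathbb{A}\setminus\{0,N\}$ such that $N$ is a $\beta$-Korselt number. $[-1,0[$ denotes the half-open interval $\{x:-1\le x<0\}$. *)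

(* Defs.v *)
From mathcomp Require Import all_boot all_order all_algebra.
Set Implicit Arguments. Unset Strict Implicit. Unset Printing Implicit Defensive.
Import Order.TTheory GRing.Theory Num.Theory.
Local Open Scope ring_scope.

(* alpha = numq alpha / denq alpha with denq > 0 and coprime: MathComp's
   normal form of a rational, i.e. alpha_1 = numq alpha, alpha_2 = denq alpha. *)

Definition korselt (N : nat) (alpha : rat) : Prop :=
  (2 <= N)%N /\ alpha != 0 /\ alpha != (N%:R : rat) /\
  forall p : nat, prime p -> (p %| N)%N ->
    ((denq alpha * p%:Z - numq alpha) %| (denq alpha * N%:Z - numq alpha))%Z.

Definition KS (A : rat -> Prop) (N : nat) (beta : rat) : Prop :=
  A beta /\ beta != 0 /\ beta != (N%:R : rat) /\ korselt N beta.

Definition A_m10 (x : rat) : Prop := -1 <= x /\ x < 0.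

(* Main.v *)
Require Import Defs.
From mathcomp Require Import all_boot all_order all_algebra.
From mathcomp Require Import zify ring.
Import Order.TTheory GRing.Theory Num.Theory.
Local Open Scope ring_scope.

Lemma key (a b q k : int) : 1 <= a -> a <= b -> 2 <= q ->
  b * q ^+ 2 + a = k * (b * q + a) -> False.
Proof.
move=> ha hab hq; rewrite expr2 => E.
have [hk|hk] := lerP k (q - 1).
- have : k * (b * q + a) <= (q - 1) * (b * q + a).
    by rewrite ler_wpM2r // addr_ge0 // ?mulr_ge0 //; lia.
  have : a * q <= b * q by rewrite ler_wpM2r //; lia.
  have : a * 2 <= a * q by rewrite ler_wpM2l //; lia.
  rewrite -E; nia.
- have : q * (b * q + a) <= k * (b * q + a).
    by rewrite ler_wpM2r // ?addr_ge0 ?mulr_ge0 //; lia.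
  have : a * 2 <= a * q by rewrite ler_wpM2l //; lia.
  rewrite -E; nia.
Qed.

Theorem corollary5p8 (q : nat) : prime q ->
  forall beta : rat, ~ KS A_m10 (q ^ 2)%N beta.
Proof.
move=> pq beta [[h1 h2] [_ [_ [_ [_ [_ H]]]]]].
have := H q pq; rewrite dvdn_exp // => /(_ isT) /dvdzP [k Ek].
have dp := denq_gt0 beta.
have np : numq beta < 0 by rewrite numq_lt0.
have hb : - denq beta <= numq beta.
  have : -1 <= (numq beta)%:~R / (denq beta)%:~R :> rat by rewrite divq_num_den.
  rewrite ler_pdivlMr ?ltr0z // mulN1r -rmorphN /= ler_int; exact.
have q2 : (2 <= q)%N := prime_gt1 pq.
apply: (@key (- numq beta) (denq beta) q%:Z k); first by lia.
- by lia.
- by lia.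
- have e : Posz (q ^ 2)%N = q%:Z ^+ 2 by rewrite expr2 -PoszM mulnn.
  move: Ek; rewrite e => Ek.
  exact: Ek.
Qed.
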